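(* Let $X$ and $Y$ be complex Banach spaces with $Y$ continuously embedded in $X$, let $C\in L(X)$, let $B$ be a closed linear operator on $X$, let $A:\mathbb N_0\to L(Y,X)$, and let $k:\mathbb N_0\to\mathbb C$ with $k\neq0$. Let $(S(v))_{v\in\mathbb N_0}\subseteq L(X)$ be such that $S(v)Y\subseteq Y$ and $S(v)_{|Y}\in L(Y)$ for all $v\in\mathbb N_0$, and for all $v\in\mathbb N_0$ and $y\in Y$ one has $S(v)y\in D(B)$ and $$BS(v)y=k(v)Cy+\sum_{j=0}^{v}A(v-j)S(j)y .$$ Assume $\sum_{v=0}^{\infty}\|S(v)_{|Y}\|_{L(Y)}<\infty$ and $\sum_{v=0}^{\infty}\|(A\ast_0S)(v)\|_{L(Y,X)}<\infty$, where $(A\ast_0 S)(v)y:=\sum_{j=0}^{v}A(v-j)S(j)y$ for $y\in Y$. Suppose further that either (i) $f:\mathbb Z\to Y$ is bounded (in $Y$), $\sum_{v=0}^{\infty}|k(v)|<\infty$ and $\sum_{v=0}^{\infty}\|A(v)\|_{L(Y,X)}<\infty$; or (ii) $f\in l^1(\mathbb Z:Y)$, $k$ is bounded and $\sup_{v\ge0}\|A(v)\|_{L(Y,X)}<\infty$. Define $u(v):=\sum_{l=-\infty}^{v}S(v-l)f(l)$ for $v\in\mathbb Z$. Then $u$ is bounded, $u\in l^1(\mathbb Z:Y)$ provided that (ii) holds, $u(v)\in D(B)$ for all $v\in\mathbb Z$, and $$Bu(v)=\sum_{l=-\infty}^{v}k(v-l)Cf(l)+\sum_{l=-\infty}^{v}A(v-l)u(l),\quad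 v\in\mathbb Z .$$
   Context: $L(X)$, $L(Y)$, $L(Y,X)$ denote spaces of bounded linear operators with operator norms; $l^1(\mathbb Z:Y)$ is the space of summable $Y$-valued sequences on $\mathbb Z$. *)

(* Defs.v *)
From HB Require Import structures.
From mathcomp Require Import all_boot all_order all_algebra.
From mathcomp Require Import complex.
From mathcomp Require Import all_classical all_reals all_analysis.
Import Order.TTheory GRing.Theory Num.Theory.
Set Implicit Arguments. Unset Strict Implicit. Unset Printing Implicit Defensive.
Local Open Scope ring_scope.
Local Open Scope classical_set_scope.

(* Complex Banach spaces: completeNormedModType R[i] for R : realType.
   The library norm `|x| takes values in R[i] (always a nonnegative real);
   nrm x is its real part, i.e. the norm as a real number. *)
Definition nrm (R : realType) (V : normedModType R[i]) (x : V) : R :=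
  complex.Re `|x|.

Definition opnorm (R : realType) (U V : normedModType R[i]) (T : U -> V)
  : \bar R :=
  ereal_sup [set (nrm (T x))%:E | x in [set x : U | nrm x <= 1]].

Definition closed_operator (R : realType) (X : normedModType R[i])
    (D : set X) (B : X -> X) : Prop :=
  [/\ D 0,
      (forall (a : R[i]) (x y : X), D x -> D y -> D (a *: x + y)),
      (forall (a : R[i]) (x y : X), D x -> D y -> B (a *: x + y) = a *: B x + B y)
    & closed [set p : X * X | D p.1 /\ B p.1 = p.2]].

(* (A *_0 S)(v) y := sum_{j=0}^v A(v-j) S(j) y ; here SY j is S(j)|_Y *)
Definition convAS0 (R : realType) (Y X : normedModType R[i])
    (A : nat -> Y -> X) (SY : nat -> Y -> Y) (v : nat) (y : Y) : X :=
  \sum_(j < v.+1) A (v - j)%N (SY j y).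

(* u(v) := sum_{l=-oo}^{v} S(v-l) f(l) = sum_{m>=0} S(m) f(v-m)  (in Y) *)
Definition uconv (R : realType) (Y : normedModType R[i])
    (SY : nat -> Y -> Y) (f : int -> Y) (v : int) : Y :=
  limn (series (fun m : nat => SY m (f (v - m%:Z)))).

Definition bounded_seq (R : realType) (V : normedModType R[i]) (I : Type)
    (g : I -> V) : Prop :=
  exists M : R, forall i, nrm (g i) <= M.

Definition l1Z (R : realType) (V : normedModType R[i]) (g : int -> V) : Prop :=
  (\esum_(l in [set: int]) (nrm (g l))%:E < +oo)%E.

(* Main.v *)
Require Import Defs.
From HB Require Import structures.
From mathcomp Require Import all_boot all_order all_algebra.
From mathcomp Require Import complex.
From mathcomp Require Import all_classical all_reals all_analysis.
From mathcomp Require Import lra zify.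
Import Order.TTheory GRing.Theory Num.Theory.
Import numFieldNormedType.Exports.
Local Open Scope ring_scope.
Local Open Scope classical_set_scope.
Set Implicit Arguments. Unset Strict Implicit.

Section Basic.
Variable R : realType.

Lemma pos_real {e : R[i]} : 0 < e -> e = (complex.Re e)%:C%C /\ 0 < complex.Re e.
Proof. by case: e => a b; rewrite ltcE /= => /andP[/eqP -> h]. Qed.

Lemma nneg_real {e : R[i]} : 0 <= e -> e = (complex.Re e)%:C%C /\ 0 <= complex.Re e.
Proof. by case: e => a b; rewrite lecE /= => /andP[/eqP -> h]. Qed.

Variable V : normedModType R[i].

Lemma normE (x : V) : `|x| = (nrm x)%:C%C.
Proof. by have [h1 h2] := nneg_real (normr_ge0 x). Qed.

Lemma nrm_ge0 (x : V) : 0 <= nrm x.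
Proof. by have [h1 h2] := nneg_real (normr_ge0 x). Qed.

Lemma nrmD (x y : V) : nrm (x + y) <= nrm x + nrm y.
Proof. by rewrite -lecR rmorphD /= -!normE ler_normD. Qed.

Lemma nrm0 : nrm (0 : V) = 0.
Proof. by rewrite /nrm normr0. Qed.

Lemma nrmN (x : V) : nrm (- x) = nrm x.
Proof. by rewrite /nrm normrN. Qed.

Lemma nrmB (x y : V) : nrm (x - y) = nrm (y - x).
Proof. by rewrite /nrm distrC. Qed.

Lemma nrm_eq0 (x : V) : nrm x = 0 -> x = 0.
Proof. by move=> h; apply/normr0_eq0; rewrite normE h. Qed.

Lemma nrm_sum (I : Type) (s : seq I) (F : I -> V) :
  nrm (\sum_(i <- s) F i) <= \sum_(i <- s) nrm (F i).
Proof.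
elim: s => [|a s IH]; first by rewrite !big_nil nrm0.
rewrite !big_cons; apply: le_trans (nrmD _ _) _; exact: lerD.
Qed.

Lemma nrmZ (a : R[i]) (x : V) : nrm (a *: x) = complex.Re `|a| * nrm x.
Proof.
rewrite /nrm normrZ (normE x) /nrm.
by case: (`|a|) => p q /=; rewrite mulr0 subr0.
Qed.

Lemma ncx_ge0 (a : R[i]) : 0 <= complex.Re `|a|.
Proof. by have [h1 h2] := nneg_real (normr_ge0 a). Qed.

Lemma nrm_lt (x : V) (e : R) : `|x| < e%:C%C -> nrm x < e.
Proof. by rewrite normE ltcR. Qed.

Lemma near_sum0 (I : Type) (s : seq I) (z : I -> nat -> V) (zl : I -> V) :
  (forall i, z i @ \oo --> zl i) ->
  forall e : R, 0 < e -> \forall N \near \oo, \sum_(i <- s) nrm (zl i - z i N) < e.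
Proof.
move=> Hz; elim: s => [|a s IH] e e0.
  by apply: nearW => N; rewrite big_nil.
have e2 : 0 < e / 2 by rewrite divr_gt0.
have Ha := (cvgrPdist_lt _ _).1 (Hz a) (e / 2)%:C%C ltac:(by rewrite ltcR).
near=> N; rewrite big_cons (splitr e); apply: ltrD.
  by apply: nrm_lt; near: N; exact: Ha.
by near: N; exact: IH.
Unshelve. all: by end_near. Qed.

Lemma G0 (I : Type) (s : seq I) (z : I -> nat -> V) (zl : I -> V) (M : R) :
  (forall i, z i @ \oo --> zl i) ->
  (\forall N \near \oo, \sum_(i <- s) nrm (z i N) <= M) ->
  \sum_(i <- s) nrm (zl i) <= M.
Proof.
move=> Hz HM; apply/ler_addgt0Pr => e e0.
have [N [h1 h2]] := filter_ex (filterI HM (near_sum0 s Hz e0)).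
apply: le_trans (_ : \sum_(i <- s) (nrm (z i N) + nrm (zl i - z i N)) <= _).
  apply: ler_sum => i _; rewrite -{1}(subrKC (z i N) (zl i)); exact: nrmD.
rewrite big_split /=; apply: lerD => //; exact: ltW.
Qed.

Lemma limle (z : nat -> V) (l : V) (M : R) :
  z @ \oo --> l -> (\forall N \near \oo, nrm (z N) <= M) -> nrm l <= M.
Proof.
move=> Hz HM.
have := @G0 unit [:: tt] (fun _ => z) (fun _ => l) M (fun _ => Hz).
rewrite big_seq1; apply; apply: filterS HM => N; by rewrite big_seq1.
Qed.

End Basic.

Section Series.
Variable R : realType.

Lemma real_series_cvg (b : R ^nat) (M : R) :
  (forall n, 0 <= b n) -> (forall N, series b N <= M) ->
  [/\ cvgn (series b), limn (series b) <= M & forall N, series b N <= limn (series b)].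
Proof.
move=> b0 bM.
have nd : {homo series b : n m / (n <= m)%N >-> n <= m}.
  by move=> n m nm; rewrite /series /=; exact: nondecreasing_series.
have cb : cvgn (series b).
  by apply: nondecreasing_is_cvgn => //; exists M => _ [n _ <-].
split => //; last exact: nondecreasing_cvgn_le.
by apply: limr_le => //; apply: nearW.
Qed.

Variable V : completeNormedModType R[i].

Lemma BL (a : nat -> V) (b : R ^nat) (M : R) :
  (forall n, nrm (a n) <= b n) -> (forall N, series b N <= M) ->
  [/\ cvgn (series a), nrm (limn (series a)) <= M &
     forall J, nrm (limn (series a) - series a J) <= M - series b J].
Proof.
move=> ab bM.
have b0 : forall n, 0 <= b n by move=> n; exact: le_trans (nrm_ge0 _) (ab n).
have [cb _ _] := real_series_cvg b0 bM.
have Hcb : cauchy (series b @ \oo) by exact/cauchy_cvgP.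
move/cauchy_seriesP: Hcb => Hcb.
have ca : cvgn (series a).
  apply/cauchy_cvgP/cauchy_seriesP => e e0.
  have [eE e'0] := pos_real e0; rewrite eE.
  apply: filterS (Hcb _ e'0) => -[m n] /= h.
  rewrite normE ltcR; apply: le_lt_trans h.
  apply: le_trans (ler_norm _); apply: le_trans (nrm_sum _ _) _; exact: ler_sum.
have sab : forall m n, nrm (\sum_(m <= k < n) a k) <= \sum_(m <= k < n) b k.
  by move=> m n; apply: le_trans (nrm_sum _ _) _; exact: ler_sum.
split => //.
  apply: limle ca _; apply: nearW => N.
  apply: le_trans (bM N); rewrite /series /=; exact: sab.
move=> J; apply: limle (cvgB ca (cvg_cst (series a J))) _.
near=> N; have HJ : (J <= N)%N by near: N; exact: nbhs_infty_ge.
have -> : (series a - (fun=> series a J)) N = series a N - series a J by [].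
rewrite sub_series HJ; apply: le_trans (sab _ _) _.
have := sub_series b J N; rewrite HJ => <-.
by rewrite lerD2r.
Unshelve. all: by end_near. Qed.

Lemma tannery (x : nat -> nat -> V) (xi : nat -> V) (w : R ^nat) (W : R) :
  (forall N m, nrm (x N m) <= w m) ->
  (forall m, (fun N => x N m) @ \oo --> xi m) ->
  (forall N, series w N <= W) ->
  cvgn (series xi) /\ (fun N => series (x N) N) @ \oo --> limn (series xi).
Proof.
move=> xw xc wW.
have w0 : forall m, 0 <= w m by move=> m; exact: le_trans (nrm_ge0 _) (xw 0%N m).
have [cw _ wle] := real_series_cvg w0 wW.
set Sw := limn (series w) in wle.
have xiw : forall m, nrm (xi m) <= w m.
  by move=> m; apply: limle (xc m) _; apply: nearW.
have [cxi _ tail] := BL xiw wle.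
split => //; apply/cvgrPdist_lt => e e0.
have [eE e'0] := pos_real e0; rewrite eE; set ep := complex.Re e.
have e3 : 0 < ep / 3 by rewrite divr_gt0.
have [M HM] := filter_ex ((cvgrPdist_lt _ _).1 cw _ e3).
have Hn := @near_sum0 _ _ _ (index_iota 0 M) (fun m N => x N m) xi xc _ e3.
near=> N.
have HMN : (M <= N)%N by near: N; exact: nbhs_infty_ge.
have h1 : \sum_(m <- index_iota 0 M) nrm (xi m - x N m) < ep / 3 by near: N; exact: Hn.
rewrite normE ltcR.
have E : limn (series xi) - series (x N) N =
  (limn (series xi) - series xi M) + \sum_(0 <= m < M) (xi m - x N m)
  - \sum_(M <= m < N) x N m.
  rewrite /series /= (big_cat_nat (leq0n M) HMN) /= sumrB.
  by rewrite opprD addrA -[_ - _ + (_ - _)]addrA addKr.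
rewrite E; apply: le_lt_trans (nrmD _ _) _; rewrite nrmN.
apply: le_lt_trans (lerD (nrmD _ _) (lexx _)) _.
have h2 : nrm (\sum_(M <= m < N) x N m) <= series w N - series w M.
  have := sub_series w M N; rewrite HMN => ->.
  by apply: le_trans (nrm_sum _ _) _; apply: ler_sum => m _.
have h3 := tail M.
have h4 : Sw - series w M < ep / 3.
  by apply: le_lt_trans HM; exact: ler_norm.
have h5 : series w N <= Sw := wle N.
have h6 := nrm_sum (index_iota 0 M) (fun m => xi m - x N m).
move: h1 h2 h3 h4 h5 h6; rewrite -/Sw.
set a1 := nrm _; set a2 := nrm _; set a3 := nrm _.
set s1 := \sum_(_ <- _) _; set t1 := series w N; set t2 := series w M.
move=> h1 h2 h3 h4 h5 h6; lra.
Unshelve. all: by end_near. Qed.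

End Series.

Section Esum.
Variable R : realType.
Local Open Scope ereal_scope.

Lemma esum_seq (T : choiceType) (g : T -> \bar R) (s : seq T) :
  (forall x, 0 <= g x) -> uniq s -> \sum_(x <- s) g x <= \esum_(i in [set: T]) g i.
Proof.
move=> g0 us; apply: esum_ge; exists [set` s]; first by split.
by rewrite -fsbig_seq.
Qed.

Lemma esum_le_seq (T : choiceType) (g : T -> \bar R) (M : \bar R) :
  (forall s, uniq s -> \sum_(x <- s) g x <= M) -> \esum_(i in [set: T]) g i <= M.
Proof.
move=> H; apply: ge_ereal_sup => _ [X [finX _] <-].
rewrite fsbig_finite //; apply: H; exact: finmap.fset_uniq.
Qed.

Lemma fin_of (x : \bar R) : 0 <= x -> x < +oo -> x = (fine x)%:E.
Proof. by move=> x0 xoo; rewrite fineK // ge0_fin_numE. Qed.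

Lemma esum_real_seq (T : choiceType) (g : T -> R) :
  (forall x, (0 <= g x)%R) -> \esum_(i in [set: T]) (g i)%:E < +oo ->
  exists M : R, forall s, uniq s -> (\sum_(x <- s) g x <= M)%R.
Proof.
move=> g0 Hoo; exists (fine (\esum_(i in [set: T]) (g i)%:E)) => s us.
rewrite -lee_fin -fin_of //; last by apply: esum_ge0 => x _; rewrite lee_fin.
by rewrite -sumEFin; apply: esum_seq => // x; rewrite lee_fin.
Qed.

Lemma real_seq_esum (T : choiceType) (g : T -> R) (M : R) :
  (forall s, uniq s -> (\sum_(x <- s) g x <= M)%R) ->
  \esum_(i in [set: T]) (g i)%:E < +oo.
Proof.
move=> H; apply: (@le_lt_trans _ _ M%:E); last exact: ltry.
by apply: esum_le_seq => s us; rewrite sumEFin lee_fin; exact: H.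
Qed.

Lemma esum_ereal_seq (g : nat -> \bar R) :
  (forall x, 0 <= g x) -> \esum_(i in [set: nat]) g i < +oo ->
  (forall n, g n < +oo) /\
  exists M : R, forall N, (\sum_(0 <= n < N) fine (g n) <= M)%R.
Proof.
move=> g0 Hoo.
have gle : forall n, g n <= \esum_(i in [set: nat]) g i.
  by move=> n; have := @esum_seq _ g [:: n] g0 erefl; rewrite big_seq1.
have gf : forall n, g n < +oo by move=> n; exact: le_lt_trans (gle n) Hoo.
split => //; exists (fine (\esum_(i in [set: nat]) g i)) => N.
rewrite -lee_fin -fin_of //; last by apply: esum_ge0.
rewrite -sumEFin; under eq_bigr do rewrite -fin_of //.
apply: esum_seq => //; exact: iota_uniq.
Qed.

End Esum.

Section Opnorm.
Variable R : realType.

Lemma ncxR (c : R) : complex.Re `|c%:C%C| = `|c|.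
Proof. by rewrite normc_def /= expr0n /= addr0 sqrtr_sqr. Qed.

Variables U W : normedModType R[i].

Lemma opnorm_ge0 (T : U -> W) : T 0 = 0 -> (0 <= opnorm T)%E.
Proof.
move=> T0; apply: ereal_sup_ubound; exists 0; last by rewrite T0 nrm0.
by rewrite /= nrm0 ler01.
Qed.

Lemma opnorm_bound (T : U -> W) :
  (forall (a : R[i]) x, T (a *: x) = a *: T x) -> (opnorm T < +oo)%E ->
  forall x, nrm (T x) <= fine (opnorm T) * nrm x.
Proof.
move=> TZ Toof.
have T0 : T 0 = 0 by rewrite -(scale0r (0 : U)) TZ scale0r.
have oE := fin_of (opnorm_ge0 T0) Toof.
move=> x; have [x0|x0] := eqVneq (nrm x) 0.
  by rewrite x0 mulr0 (nrm_eq0 x0) T0 nrm0.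
have xp : 0 < nrm x by rewrite lt0r x0 nrm_ge0.
have y1 : nrm ((nrm x)^-1%:C%C *: x) <= 1.
  by rewrite nrmZ ncxR ger0_norm ?invr_ge0 ?nrm_ge0 // mulVf.
have : ((nrm (T ((nrm x)^-1%:C%C *: x)))%:E <= opnorm T)%E.
  by apply: ereal_sup_ubound; exists ((nrm x)^-1%:C%C *: x).
rewrite {1}oE lee_fin TZ nrmZ ncxR ger0_norm ?invr_ge0 ?nrm_ge0 //.
by rewrite ler_pdivrMl // mulrC.
Qed.

Lemma opnorm_fine_ge0 (T : U -> W) : T 0 = 0 -> 0 <= fine (opnorm T).
Proof. by move=> T0; apply/fine_ge0/opnorm_ge0. Qed.

Lemma lin_bound (T : {linear U -> W}) : continuous T ->
  exists c, 0 <= c /\ forall x, nrm (T x) <= c * nrm x.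
Proof.
move/linear_bounded_continuous => /linear_boundedP /pinfty_ex_gt0 [r r0 Hr].
have [rE rp] := pos_real r0; exists (complex.Re r); split; first exact: ltW.
by move=> x; have := Hr x; rewrite !normE rE -rmorphM /= lecR.
Qed.

End Opnorm.

Lemma DB_sum (R : realType) (X : normedModType R[i]) (D : set X) (B : X -> X) :
  closed_operator D B -> forall (I : Type) (s : seq I) (F : I -> X),
  (forall i, D (F i)) ->
  D (\sum_(i <- s) F i) /\ B (\sum_(i <- s) F i) = \sum_(i <- s) B (F i).
Proof.
case=> D0 Dl Bl _ I s F HF.
have B0 : B 0 = 0.
  have := Bl 1 0 0 D0 D0; rewrite !scale1r addr0 => h.
  by apply: (@addrI _ (B 0)); rewrite addr0 -h.
elim: s => [|a s [IHD IHB]]; first by rewrite !big_nil.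
rewrite !big_cons; split.
  by have := Dl 1 _ _ (HF a) IHD; rewrite scale1r.
by rewrite -IHB; have := Bl 1 _ _ (HF a) IHD; rewrite !scale1r.
Qed.

Lemma cvg_sumR (R : realType) (I : Type) (s : seq I) (z : I -> nat -> R) (zl : I -> R) :
  (forall i, z i @ \oo --> zl i) ->
  (fun N => \sum_(i <- s) z i N) @ \oo --> \sum_(i <- s) zl i.
Proof.
move=> Hz; elim: s => [|a s IH].
  rewrite big_nil; under eq_fun do rewrite big_nil; exact: cvg_cst.
rewrite big_cons; under eq_fun do rewrite big_cons; exact: cvgD.
Qed.

Lemma le_of_cvg (R : realType) (z : nat -> R) (l M : R) :
  z @ \oo --> l -> (forall N, z N <= M) -> l <= M.
Proof.
move=> Hz HM; rewrite -(cvg_lim _ Hz) //; apply: limr_le; first by apply/cvg_ex; exists l.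
exact: nearW.
Qed.

Lemma subn_cvg (m : nat) : (fun N => (N - m)%N) @ \oo --> \oo.
Proof.
move=> P [K _ HK]; exists (K + m)%N => // N /= h; apply: HK => /=; lia.
Qed.

Lemma tri (V : zmodType) (G : nat -> nat -> V) (N : nat) :
  \sum_(0 <= m < N) \sum_(0 <= j < N - m) G m j =
  \sum_(0 <= n < N) \sum_(0 <= j < n.+1) G (n - j)%N j.
Proof.
elim: N => [|N IH]; first by rewrite !big_geq.
rewrite [RHS]big_nat_recr //= -IH.
have E : forall m, (m < N.+1)%N ->
  \sum_(0 <= j < N.+1 - m) G m j = \sum_(0 <= j < N - m) G m j + G m (N - m)%N.
  move=> m hm; have -> : (N.+1 - m = (N - m).+1)%N by lia.
  by rewrite big_nat_recr.
rewrite (@eq_big_nat _ _ _ 0 N.+1 _ (fun m => \sum_(0 <= j < N - m) G m j + G m (N - m)%N));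
  last by move=> m /andP[_ hm]; exact: E.
rewrite big_split /= [in X in X + _ = _]big_nat_recr //= subnn (big_geq (leqnn 0)) addr0.
congr (_ + _).
rewrite (big_nat_rev _ _ 0 N.+1) /=.
apply: eq_big_nat => i /andP[_ hi].
have -> : (0 + N.+1 - i.+1 = N - i)%N by lia.
by have -> : (N - (N - i) = i)%N by lia.
Qed.

Unset Implicit Arguments. Set Strict Implicit.


Theorem theorem2p4 (R : realType)
  (X Y : completeNormedModType R[i])
  (iota : {linear Y -> X})
  (iota_inj : injective iota) (iota_cont : continuous iota)
  (C : {linear X -> X}) (C_cont : continuous C)
  (D : set X) (B : X -> X) (B_closed : closed_operator D B)
  (A : nat -> {linear Y -> X}) (A_cont : forall v, continuous (A v))
  (k : nat -> R[i]) (k_neq0 : k <> (fun _ => 0))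
  (S : nat -> {linear X -> X}) (S_cont : forall v, continuous (S v))
  (SY : nat -> {linear Y -> Y}) (SY_cont : forall v, continuous (SY v))
  (SY_restr : forall v (y : Y), iota (SY v y) = S v (iota y))
  (SD : forall v (y : Y), D (S v (iota y)))
  (SB : forall v (y : Y),
     B (S v (iota y)) = k v *: C (iota y) + \sum_(j < v.+1) A (v - j)%N (SY j y))
  (S_sum : (\esum_(v in [set: nat]) opnorm (SY v) < +oo)%E)
  (AS_sum : (\esum_(v in [set: nat])
               opnorm (convAS0 (fun n => A n : Y -> X) (fun n => SY n : Y -> Y) v)
             < +oo)%E)
  (f : int -> Y)
  (hyp : (bounded_seq f
          /\ (\esum_(v in [set: nat]) (nrm (k v : R[i]^o))%:E < +oo)%E
          /\ (\esum_(v in [set: nat]) opnorm (A v) < +oo)%E)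
      \/ (l1Z f
          /\ bounded_seq (fun v : nat => (k v : R[i]^o))
          /\ (ereal_sup [set opnorm (A v) | v in [set: nat]] < +oo)%E)) :
  let u := uconv (fun n => SY n : Y -> Y) f in
  (forall v : int, cvgn (series (fun m : nat => SY m (f (v - m%:Z)))))
  /\ bounded_seq u
  /\ ((l1Z f
       /\ bounded_seq (fun v : nat => (k v : R[i]^o))
       /\ (ereal_sup [set opnorm (A v) | v in [set: nat]] < +oo)%E) -> l1Z u)
  /\ (forall v : int, D (iota (u v)))
  /\ (forall v : int,
        cvgn (series (fun m : nat => k m *: C (iota (f (v - m%:Z)))))
        /\ cvgn (series (fun m : nat => A m (u (v - m%:Z))))
        /\ B (iota (u v)) =
             limn (series (fun m : nat => k m *: C (iota (f (v - m%:Z)))))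
             + limn (series (fun m : nat => A m (u (v - m%:Z))))).
Proof.
move=> u.
have B_closed' := B_closed.
case: B_closed' => D0 Dl Bl Gcl.
have SYZ : forall v (a : R[i]) (y : Y), SY v (a *: y) = a *: SY v y.
  by move=> v a y; rewrite linearZ.
have SY0 : forall v, SY v 0 = 0 by move=> v; rewrite linear0.
have [Sfin [MS HMS]] := @esum_ereal_seq _ (fun v => opnorm (SY v)) (fun v => opnorm_ge0 (SY0 v)) S_sum.
set sS := fun v => fine (opnorm (SY v)) in HMS.
have bS : forall v y, nrm (SY v y) <= sS v * nrm y := fun v => opnorm_bound (SYZ v) (Sfin v).
have sS0 : forall v, 0 <= sS v := fun v => opnorm_fine_ge0 (SY0 v).
set cAS := convAS0 (fun n => A n : Y -> X) (fun n => SY n : Y -> Y) in AS_sum.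
have cASZ : forall v (a : R[i]) (y : Y), cAS v (a *: y) = a *: cAS v y.
  move=> v a y; rewrite /cAS /convAS0 scaler_sumr; apply: eq_bigr => j _.
  by rewrite !linearZ.
have cAS0 : forall v, cAS v 0 = 0 by move=> v; rewrite -(scale0r (0:Y)) cASZ scale0r.
have [ASfin [MAS HMAS]] := @esum_ereal_seq _ (fun v => opnorm (cAS v)) (fun v => opnorm_ge0 (cAS0 v)) AS_sum.
set sAS := fun v => fine (opnorm (cAS v)) in HMAS.
have bAS : forall v y, nrm (cAS v y) <= sAS v * nrm y := fun v => opnorm_bound (cASZ v) (ASfin v).
have sAS0 : forall v, 0 <= sAS v := fun v => opnorm_fine_ge0 (cAS0 v).
have [cC [cC0 bC]] := lin_bound C_cont.
have [ci [ci0 bi]] := lin_bound iota_cont.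
have bCi : forall y, nrm (C (iota y)) <= cC * ci * nrm y.
  by move=> y; apply: le_trans (bC _) _; rewrite -mulrA ler_wpM2l.
have AZ : forall v (a : R[i]) (y : Y), A v (a *: y) = a *: A v y.
  by move=> v a y; rewrite linearZ.
have A0 : forall v, A v 0 = 0 by move=> v; rewrite linear0.
have [Mf bf] : exists Mf, forall l, nrm (f l) <= Mf.
  case: hyp => [[[M HM] _]|[Hl _]]; first by exists M.
  have [Lf HLf] := @esum_real_seq _ _ (fun l => nrm (f l)) (fun l => nrm_ge0 _) Hl.
  by exists Lf => l; have := HLf [:: l] erefl; rewrite big_seq1.
have Mf0 : 0 <= Mf := le_trans (nrm_ge0 _) (bf 0).
have MS0 : 0 <= MS by have := HMS 0%N; rewrite big_geq.
have ser_cvg : forall l, cvgn (series (fun m => SY m (f (l - m%:Z)))) /\ nrm (u l) <= MS * Mf.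
  move=> l.
  have HN : forall N, series (fun m => sS m * Mf) N <= MS * Mf.
    by move=> N; rewrite /series /= -mulr_suml ler_wpM2r.
  have [c1 c2 _] := @BL _ _ (fun m => SY m (f (l - m%:Z))) (fun m => sS m * Mf) (MS * Mf)
    (fun m => le_trans (bS _ _) (ler_wpM2l (sS0 m) (bf _))) HN.
  by split.
have injsub : forall (c : int), injective (fun l : int => l - c).
  by move=> c a b /= /(congr1 (fun z => z + c)); rewrite !subrK.
have injvm : forall (v : int), injective (fun m : nat => v - m%:Z).
  move=> v a b /= h; have : a%:Z = b%:Z by apply: oppr_inj; apply: (addrI v).
  by case.
have l1u : l1Z f -> l1Z u.
  move=> Hl; have [Lf HLf] := @esum_real_seq _ _ (fun l => nrm (f l)) (fun l => nrm_ge0 _) Hl.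
  have Lf0 : 0 <= Lf by have := HLf [::] erefl; rewrite big_nil.
  apply: (@real_seq_esum _ _ (fun l => nrm (u l)) (MS * Lf)) => s us.
  apply: (@G0 _ _ _ s (fun l N => series (fun m => SY m (f (l - m%:Z))) N) u).
    by move=> l; exact: (ser_cvg l).1.
  apply: nearW => N.
  apply: (@le_trans _ _ (\sum_(l <- s) \sum_(0 <= j < N) sS j * nrm (f (l - j%:Z)))).
    apply: ler_sum => l _; rewrite /series /=; apply: le_trans (nrm_sum _ _) _.
    by apply: ler_sum => j _; exact: bS.
  rewrite exchange_big /=.
  apply: (@le_trans _ _ (\sum_(0 <= j < N) sS j * Lf)).
    apply: ler_sum => j _; rewrite -mulr_sumr; apply: ler_wpM2l => //.
    have := HLf (map (fun l => l - j%:Z) s); rewrite big_map; apply.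
    by rewrite map_inj_uniq //; exact: injsub.
  by rewrite -mulr_suml ler_wpM2r // HMS.
have CCi0 : 0 <= cC * ci by rewrite mulr_ge0.
have Kc : forall v : int, cvgn (series (fun m => k m *: C (iota (f (v - m%:Z))))).
  move=> v; case: hyp => [[_ [Hk HA]]|[Hl [[Mk HMk] HA]]].
    have [Mk HMk] := @esum_real_seq _ _ (fun v => nrm (k v : R[i]^o)) (fun v => nrm_ge0 _) Hk.
    have HN : forall N, series (fun m => nrm (k m : R[i]^o) * (cC * ci * Mf)) N <= Mk * (cC * ci * Mf).
      move=> N; rewrite /series /= -mulr_suml; apply: ler_wpM2r; first by rewrite mulr_ge0.
      exact: HMk (index_iota 0 N) (iota_uniq _ _).
    have [] := @BL _ _ (fun m => k m *: C (iota (f (v - m%:Z))))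
      (fun m => nrm (k m : R[i]^o) * (cC * ci * Mf)) _ _ HN => //.
    move=> m; rewrite nrmZ; apply: ler_wpM2l; first exact: ncx_ge0.
    by apply: le_trans (bCi _) _; apply: ler_wpM2l.
  have [Lf HLf] := @esum_real_seq _ _ (fun l => nrm (f l)) (fun l => nrm_ge0 _) Hl.
  have Mk0 : 0 <= Mk := le_trans (nrm_ge0 _) (HMk 0%N).
  have HN : forall N, series (fun m => Mk * (cC * ci * nrm (f (v - m%:Z)))) N <= Mk * (cC * ci * Lf).
    move=> N; rewrite /series /= -mulr_sumr; apply: ler_wpM2l => //.
    rewrite -mulr_sumr; apply: ler_wpM2l => //.
    have := HLf (map (fun m => v - m%:Z) (index_iota 0 N)); rewrite big_map; apply.
    by rewrite map_inj_uniq ?iota_uniq //; exact: injvm.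
  have [] := @BL _ _ (fun m => k m *: C (iota (f (v - m%:Z))))
    (fun m => Mk * (cC * ci * nrm (f (v - m%:Z)))) _ _ HN => //.
  move=> m; rewrite nrmZ; apply: ler_pM; [exact: ncx_ge0|exact: nrm_ge0|exact: HMk|exact: bCi].
have DB : forall v : int, D (iota (u v)) /\
    cvgn (series (fun m => cAS m (f (v - m%:Z)))) /\
    B (iota (u v)) = limn (series (fun m => k m *: C (iota (f (v - m%:Z)))))
                     + limn (series (fun m => cAS m (f (v - m%:Z)))).
  move=> v.
  set ASt := fun m => cAS m (f (v - m%:Z)).
  set Kt := fun m => k m *: C (iota (f (v - m%:Z))).
  have cASt : cvgn (series ASt).
    have HN : forall N, series (fun m => sAS m * Mf) N <= MAS * Mf.
      by move=> N; rewrite /series /= -mulr_suml ler_wpM2r.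
    have [] := @BL _ _ ASt (fun m => sAS m * Mf) (MAS * Mf)
      (fun m => le_trans (bAS _ _) (ler_wpM2l (sAS0 m) (bf _))) HN => //.
  set PN := fun N => \sum_(0 <= m < N) S m (iota (f (v - m%:Z))).
  have PNE : PN = iota \o series (fun m => SY m (f (v - m%:Z))).
    apply: funext => N; rewrite /PN /series /= linear_sum.
    by apply: eq_bigr => m _; rewrite SY_restr.
  have PNc : PN @ \oo --> iota (u v).
    by rewrite PNE; apply: continuous_cvg; [exact: iota_cont | exact: (ser_cvg v).1].
  have DBN : forall N, D (PN N) /\ B (PN N) = series Kt N + series ASt N.
    move=> N; have [h1 h2] := @DB_sum _ _ D B B_closed _ (index_iota 0 N)
      (fun m => S m (iota (f (v - m%:Z)))) (fun m => SD _ _).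
    split => //; rewrite /PN h2 /series /= -big_split /=.
    by apply: eq_bigr => m _; rewrite SB.
  have Bc : (fun N => B (PN N)) @ \oo --> limn (series Kt) + limn (series ASt).
    rewrite (_ : (fun N => B (PN N)) = series Kt + series ASt).
      exact: cvgD (Kc v) cASt.
    by apply: funext => N; rewrite (DBN N).2.
  have G : [set p : X * X | D p.1 /\ B p.1 = p.2]
      (iota (u v), limn (series Kt) + limn (series ASt)).
    have Pc : (fun N => (PN N, B (PN N))) @ \oo --> (iota (u v), limn (series Kt) + limn (series ASt)).
      exact: cvg_pair PNc Bc.
    apply: (closed_cvg _ Gcl _ _ Pc).
    by apply: nearW => N /=; split => //; exact: (DBN N).1.
  by case: G => G1 G2; split => //; split.
have Pb : forall l K, nrm (series (fun j => SY j (f (l - j%:Z))) K)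
    <= \sum_(0 <= j < K) sS j * nrm (f (l - j%:Z)).
  move=> l K; rewrite /series /=; apply: le_trans (nrm_sum _ _) _.
  by apply: ler_sum => j _; exact: bS.
have PbM : forall l K, \sum_(0 <= j < K) sS j * nrm (f (l - j%:Z)) <= MS * Mf.
  move=> l K; apply: le_trans (_ : \sum_(0 <= j < K) sS j * Mf <= _).
    by apply: ler_sum => j _; apply: ler_wpM2l.
  by rewrite -mulr_suml ler_wpM2r.
have H3 : forall v : int, exists w : R ^nat, exists W : R,
    (forall N m, nrm (A m (series (fun j => SY j (f (v - m%:Z - j%:Z))) (N - m)%N)) <= w m)
    /\ (forall N, series w N <= W).
  move=> v; case: hyp => [[_ [_ HA]]|[Hl [_ HA]]].
    have [Afin [MA HMA]] := @esum_ereal_seq _ (fun m => opnorm (A m)) (fun m => opnorm_ge0 (A0 m)) HA.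
    exists (fun m => fine (opnorm (A m)) * (MS * Mf)), (MA * (MS * Mf)); split.
      move=> N m; apply: le_trans (opnorm_bound (AZ m) (Afin m) _) _.
      apply: ler_wpM2l; first exact: opnorm_fine_ge0 (A0 m).
      exact: le_trans (Pb _ _) (PbM _ _).
    move=> N; rewrite /series /= -mulr_suml; apply: ler_wpM2r; first by rewrite mulr_ge0.
    exact: HMA.
  have Afin : forall m, (opnorm (A m) < +oo)%E.
    by move=> m; apply: le_lt_trans HA; apply: ereal_sup_ubound; exists m.
  have Ale : forall m, (opnorm (A m) <= ereal_sup [set opnorm (A v) | v in [set: nat]])%E.
    by move=> m; apply: ereal_sup_ubound; exists m.
  have sup0 := le_trans (opnorm_ge0 (A0 0%N)) (Ale 0%N).
  set MA := fine (ereal_sup [set opnorm (A v) | v in [set: nat]]).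
  have sAle : forall m, fine (opnorm (A m)) <= MA.
    move=> m; have e1 := fin_of (opnorm_ge0 (A0 m)) (Afin m).
    have e2 := fin_of sup0 HA.
    by rewrite -lee_fin -e1 -e2; exact: Ale.
  have MA0 : 0 <= MA by apply: fine_ge0.
  have [Lf HLf] := @esum_real_seq _ _ (fun l => nrm (f l)) (fun l => nrm_ge0 _) Hl.
  have Lf0 : 0 <= Lf by have := HLf [::] erefl; rewrite big_nil.
  set rho := fun m => limn (series (fun j => sS j * nrm (f (v - m%:Z - j%:Z)))).
  have rhof : forall m, [/\ cvgn (series (fun j => sS j * nrm (f (v - m%:Z - j%:Z)))),
      rho m <= MS * Mf & forall K, series (fun j => sS j * nrm (f (v - m%:Z - j%:Z))) K <= rho m].
    by move=> m; exact: real_series_cvg (fun j => mulr_ge0 (sS0 j) (nrm_ge0 _)) (fun K => PbM (v - m%:Z) K).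
  exists (fun m => MA * rho m), (MA * (MS * Lf)); split.
    move=> N m; apply: le_trans (opnorm_bound (AZ m) (Afin m) _) _.
    apply: ler_pM; [exact: opnorm_fine_ge0 (A0 m) | exact: nrm_ge0 | exact: sAle | ].
    by apply: le_trans (Pb _ _) _; have [_ _ h] := rhof m; exact: h.
  move=> N; rewrite /series /= -mulr_sumr; apply: ler_wpM2l => //.
  apply: (@le_of_cvg _ (fun K => \sum_(m <- index_iota 0 N) series (fun j => sS j * nrm (f (v - m%:Z - j%:Z))) K)).
    by apply: cvg_sumR => m; have [h _ _] := rhof m; exact: h.
  move=> K; rewrite /series /= exchange_big /=.
  apply: le_trans (_ : \sum_(0 <= j < K) sS j * Lf <= _).
    apply: ler_sum => j _; rewrite -mulr_sumr; apply: ler_wpM2l => //.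
    have := HLf (map (fun m => v - m%:Z - j%:Z) (index_iota 0 N)); rewrite big_map; apply.
    rewrite map_inj_uniq ?iota_uniq // => a b h; apply: (injvm v); exact: (injsub j _ _ h).
  by rewrite -mulr_suml ler_wpM2r.
have TT : forall v : int, cvgn (series (fun m => A m (u (v - m%:Z)))) /\
    limn (series (fun m => A m (u (v - m%:Z)))) = limn (series (fun m => cAS m (f (v - m%:Z)))).
  move=> v; have [w [W [Hw HW]]] := H3 v.
  have xc : forall m, (fun N => A m (series (fun j => SY j (f (v - m%:Z - j%:Z))) (N - m)%N))
      @ \oo --> A m (u (v - m%:Z)).
    move=> m.
    apply: (@continuous_cvg _ _ _ _ _ (fun N => series (fun j => SY j (f (v - m%:Z - j%:Z))) (N - m)%N) (A m)).
      exact: A_cont.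
    exact: (cvg_comp _ _ (subn_cvg m) (ser_cvg (v - m%:Z)).1).
  have [cxi Tc] := tannery Hw xc HW.
  have E : (fun N => series (fun m => A m (series (fun j => SY j (f (v - m%:Z - j%:Z))) (N - m)%N)) N)
      = series (fun m => cAS m (f (v - m%:Z))).
    apply: funext => N; rewrite /series /=.
    under eq_bigr do rewrite linear_sum.
    rewrite tri; apply: eq_bigr => n _.
    rewrite /cAS /convAS0 /= -(big_mkord xpredT (fun j => A (n - j)%N (SY j (f (v - n%:Z))))).
    apply: eq_big_nat => j /andP[_ hj].
    by have -> : v - (n - j)%N%:Z - j%:Z = v - n%:Z by lia.
  rewrite E in Tc; split => //.
  by rewrite (cvg_lim _ Tc).
split; first by move=> v; exact: (ser_cvg v).1.
split; first by exists (MS * Mf) => l; exact: (ser_cvg l).2.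
split; first by move=> [Hl _]; exact: l1u Hl.
split; first by move=> v; exact: (DB v).1.
move=> v; have [D1 [c2 E2]] := DB v; have [c3 E3] := TT v.
split; first exact: Kc v.
by split => //; rewrite E2 E3.
Qed.
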